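(* Let $p$ be a prime and let $(B_n)_{n\ge1}$ be a sequence of nontrivial finite $p$-groups with $a(B_n)\to\beta$ for some real number $\beta$. Then $a\big((\mathbb{Z}/p\mathbb{Z})^n\wr B_n\big)\to p\beta$ as $n\to\infty$. Consequently, if $\beta$ is an Average Order Limit, then so is $p\beta$, and hence $p^r\beta$ is an Average Order Limit for every nonnegative integer $r$.
   Context: For a finite group $G$, the average order is $a(G)=\frac{1}{|G|}\sum_{g\in G}\mathrm{order}(g)$. For groups $A,B$, let $K=\prod_{b\in B}A$, on which $B$ acts by $x\cdot(\alpha_b)_b=(\alpha_{x^{-1}b})_b$ for $x\in B$; the wreath product $A\wr B$ is the semidirect product $K\rtimes B$ for this action. For a fixed prime $p$, a real number $\beta$ is called an Average Order Limit if there is a sequence of finite $p$-groups $G_n$ with $|G_n|\to\infty$ and $a(G_n)\to\beta$. *)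

(* Defs.v *)
From HB Require Import structures.
From mathcomp Require Import all_boot all_order all_algebra all_fingroup all_solvable.
From mathcomp Require Import all_classical all_reals all_analysis.

Set Implicit Arguments.
Unset Strict Implicit.
Unset Printing Implicit Defensive.

Import Order.TTheory GRing.Theory Num.Theory.
Import numFieldNormedType.Exports.

(* Wreath product  A wr B = K ><| B,  K = prod_{b in B} A = {ffun B -> A},  *)
(* with B acting by (x . alpha)_b = alpha_{x^-1 b}.  Elements are pairs    *)

Section Wreath.
Variables A B : finGroupType.

Definition wreath_prod : Type := ({ffun B -> A} * B)%type.

HB.instance Definition _ := Finite.on wreath_prod.

Local Open Scope group_scope.

Definition wr_act (x : B) (f : {ffun B -> A}) : {ffun B -> A} :=
  [ffun b => f (x^-1 * b)].

Definition wr_mul (u v : wreath_prod) : wreath_prod :=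
  ([ffun b => u.1 b * wr_act u.2 v.1 b], u.2 * v.2).
Definition wr_one : wreath_prod := ([ffun => 1], 1).
Definition wr_inv (u : wreath_prod) : wreath_prod :=
  ([ffun b => (u.1 (u.2 * b))^-1], u.2^-1).

Lemma wr_mulA : associative wr_mul.
Proof.
case=> f x [g y] [h z]; rewrite /wr_mul /wr_act /=; congr (_, _).
  by apply/ffunP => b; rewrite !ffunE /= invMg !mulgA.
by rewrite mulgA.
Qed.

Lemma wr_mul1 : left_id wr_one wr_mul.
Proof.
case=> g y; rewrite /wr_mul /wr_act /=; congr (_, _).
  by apply/ffunP => b; rewrite !ffunE invg1 !mul1g.
by rewrite mul1g.
Qed.

Lemma wr_mulV : left_inverse wr_one wr_inv wr_mul.
Proof.
case=> f x; rewrite /wr_mul /wr_act /=; congr (_, _).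
  by apply/ffunP => b; rewrite !ffunE invgK mulVg.
by rewrite mulVg.
Qed.

HB.instance Definition _ :=
  Finite_isGroup.Build wreath_prod wr_mulA wr_mul1 wr_mulV.

End Wreath.

Local Open Scope ring_scope.

Definition avg_order (R : realType) (gT : finGroupType) : R :=
  (\sum_(g : gT) (#[g]%g)%:R) / (#|gT|)%:R.

Definition is_pgroup (p : nat) (gT : finGroupType) : bool :=
  pgroup p [set: gT].

Local Open Scope classical_set_scope.

Definition AOL (R : realType) (p : nat) (beta : R) : Prop :=
  exists G : nat -> finGroupType,
    [/\ forall n, is_pgroup p (G n),
        forall M : nat, exists N : nat, forall n, (N <= n)%N -> (M <= #|G n|)%N
      & (fun n => avg_order R (G n)) @ \oo --> beta].

(* Main.v *)
Require Import Defs.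
From HB Require Import structures.
From mathcomp Require Import all_boot all_order all_algebra all_fingroup all_solvable.
From mathcomp Require Import all_classical all_reals all_analysis.
From mathcomp Require Import ring lra.
Import Order.TTheory GRing.Theory Num.Theory.
Import numFieldNormedType.Exports.
Local Open Scope ring_scope.

Section Wr.
Variables (p k : nat) (B : finGroupType).
Hypothesis pr : prime p.
Local Notation A := 'rV['Z_p]_k.
Local Notation W := (wreath_prod A B).

Lemma wrM1 (u v : W) b : (u * v)%g.1 b = u.1 b + v.1 (u.2^-1 * b)%g.
Proof. by rewrite /= !ffunE. Qed.
Lemma wrM2 (u v : W) : (u * v)%g.2 = (u.2 * v.2)%g.
Proof. by []. Qed.
Lemma wr1 : (1 : W)%g = ([ffun => 0], 1%g).
Proof. by []. Qed.

Lemma wrX (f : {ffun B -> A}) (x : B) n :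
  ((((f, x) : W) ^+ n)%g = ([ffun b => \sum_(i < n) f ((x ^+ i)^-1 * b)%g], (x ^+ n)%g) :> W).
Proof.
elim: n => [|n IH].
  by rewrite expg0 wr1; congr (_, _); apply/ffunP => b; rewrite !ffunE big_ord0.
rewrite expgS; congr (_, _).
  apply/ffunP => b; rewrite wrM1 IH !ffunE big_ord_recl /= expg0 invg1 mul1g.
  congr (_ + _); apply: eq_bigr => i _; rewrite expgS invMg mulgA //.
by rewrite IH /= expgS.
Qed.

Definition Ssum (x : B) (f : {ffun B -> A}) : A := \sum_(i < #[x]%g) f ((x ^+ i)^-1)%g.

Lemma wr_order_dvd (f : {ffun B -> A}) (x : B) :
  [/\ (#[x] %| #[((f, x) : W)])%g%N, (#[((f, x) : W)] %| #[x] * p)%g%N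
    & Ssum x f != 0 -> ~~ (#[((f, x) : W)] %| #[x])%g%N].
Proof.
have p1 : (1 < p)%N by apply: prime_gt1.
split.
- rewrite order_dvdn; apply/eqP.
  have := expg_order ((f, x) : W); rewrite wrX => /(congr1 snd) /= ->; done.
- rewrite order_dvdn expgM wrX expg_order wrX expg1n wr1; apply/eqP; congr (_, _).
  apply/ffunP => b; rewrite !ffunE.
  under eq_bigr do rewrite expg1n invg1 mul1g.
  rewrite sumr_const card_ord -scaler_nat.
  have -> : (p%:R : 'Z_p) = 0 by apply: pchar_Zp.
  by rewrite scale0r.
- apply: contraNN; rewrite order_dvdn wrX wr1 => /eqP E.
  have := congr1 (fun w : W => w.1 1%g) E.
  rewrite !ffunE /Ssum => H; apply/eqP; rewrite -[X in _ = X]H.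
  by apply: eq_bigr => i _; rewrite mulg1.
Qed.

Lemma wr_order_bounds (f : {ffun B -> A}) (x : B) :
  (#[((f, x) : W)] <= #[x] * p)%g%N /\
  (#[x] * p <= #[((f, x) : W)] + (Ssum x f == 0%R) * (#[x] * p.-1))%g%N.
Proof.
have p0 : (0 < p)%N by apply: prime_gt0.
have [d1 d2 d3] := wr_order_dvd f x.
split; first by apply: dvdn_leq => //; rewrite muln_gt0 order_gt0.
have [m Hm] : exists m, #[((f, x) : W)]%g = (#[x]%g * m)%N.
  by exists (#[((f, x) : W)]%g %/ #[x]%g)%N; rewrite mulnC divnK.
rewrite Hm in d2 d3 *.
have xg0 := order_gt0 x.
move: d2; rewrite dvdn_pmul2l // => mp.
have m0 : (0 < m)%N by apply: (dvdn_gt0 p0 mp) ; done.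
case: eqP => [_|/eqP S0].
  rewrite mul1n -{1}(prednK p0) mulnS leq_add2r.
  by rewrite -{1}(muln1 #[x]%g) leq_mul2l m0 orbT.
have m1 : m != 1%N by apply: contraNneq (d3 S0) => ->; rewrite muln1.
by rewrite (prime_nt_dvdP pr m1 mp) addn0.
Qed.

Definition phi (a : A) (f : {ffun B -> A}) : {ffun B -> A} :=
  [ffun b => if b == 1%g then f b + a else f b].

Lemma Ssum_phi x a f : Ssum x (phi a f) = Ssum x f + a.
Proof.
rewrite /Ssum.
have -> : \sum_(i < #[x]%g) phi a f (x ^+ i)^-1%g =
  \sum_(i < #[x]%g) (f (x ^+ i)^-1%g + (if ((x ^+ i)^-1 == 1)%g then a else 0)).
  by apply: eq_bigr => i _; rewrite ffunE; case: eqP => _; rewrite ?addr0.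
rewrite big_split /=; congr (_ + _).
rewrite -(prednK (order_gt0 x)) big_ord_recl /= expg0 invg1 eqxx big1 ?addr0 //.
move=> i _; rewrite invg_eq1 /bump leq0n add1n.
case: ifP => //; rewrite -order_dvdn => /dvdn_leq /= H.
have := ltn_ord i; rewrite -ltnS prednK ?order_gt0 // => H2.
by move: (H isT); rewrite leqNgt H2.
Qed.

Lemma phi_inj a : injective (phi a).
Proof.
move=> f g E; apply/ffunP => b; have := congr1 (fun h : {ffun B -> A} => h b) E; rewrite !ffunE.
by case: eqP => _; [apply: addIr | apply: id].
Qed.

Lemma count_Ssum x :
  (#|A| * \sum_(f : {ffun B -> A}) (Ssum x f == 0%R))%N = #|{ffun B -> A}|.
Proof.
have E1 a : (\sum_(f : {ffun B -> A}) (Ssum x f == a))%N =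
            (\sum_(f : {ffun B -> A}) (Ssum x f == 0%R))%N.
  rewrite (reindex_inj (phi_inj a)); apply: eq_bigr => f _.
  by rewrite Ssum_phi -[X in _ == X]add0r (inj_eq (addIr a)).
have E2 : #|{ffun B -> A}| = (\sum_(f : {ffun B -> A}) \sum_(a : A) (Ssum x f == a))%N.
  rewrite -sum1_card; apply: eq_bigr => f _.
  rewrite (bigD1 (Ssum x f)) //= eqxx big1 // => a /negbTE.
  by rewrite eq_sym => ->.
rewrite E2 exchange_big /= (eq_bigr _ (fun a _ => E1 a)) sum_nat_const.
by rewrite cardT -cardE.
Qed.

Lemma sum_fiber_bounds x :
  (\sum_(f : {ffun B -> A}) #[((f, x) : W)]%g <= #|{ffun B -> A}| * (#[x]%g * p))%N /\
  (#|A| * (#|{ffun B -> A}| * (#[x]%g * p)) <=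
     #|A| * \sum_(f : {ffun B -> A}) #[((f, x) : W)]%g + #[x]%g * p.-1 * #|{ffun B -> A}|)%N.
Proof.
have cK : (\sum_(f : {ffun B -> A}) (#[x]%g * p))%N = (#|{ffun B -> A}| * (#[x]%g * p))%N.
  by rewrite sum_nat_const cardT -cardE.
split.
  by rewrite -cK; apply: leq_sum => f _; case: (wr_order_bounds f x).
rewrite -cK -(count_Ssum x) mulnCA -mulnDr leq_mul2l; apply/orP; right.
rewrite big_distrr /= -big_split /=; apply: leq_sum => f _.
by case: (wr_order_bounds f x) => _; rewrite [X in (_ + X)%N]mulnC.
Qed.

Lemma sumW : (\sum_(w : W) #[w]%g = \sum_(x : B) \sum_(f : {ffun B -> A}) #[((f, x) : W)]%g)%N.
Proof.
rewrite exchange_big pair_big /=.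
by apply: eq_bigr => -[f x] _.
Qed.

Lemma total_bounds :
  (\sum_(w : W) #[w]%g <= #|{ffun B -> A}| * ((\sum_(x : B) #[x]%g) * p))%N /\
  (#|A| * (#|{ffun B -> A}| * ((\sum_(x : B) #[x]%g) * p)) <=
     #|A| * \sum_(w : W) #[w]%g + (\sum_(x : B) #[x]%g) * p.-1 * #|{ffun B -> A}|)%N.
Proof.
have E : (#|{ffun B -> A}| * ((\sum_(x : B) #[x]%g) * p))%N =
          (\sum_(x : B) #|{ffun B -> A}| * (#[x]%g * p))%N.
  by rewrite big_distrl big_distrr.
have E2 : (#|A| * \sum_(w : W) #[w]%g + (\sum_(x : B) #[x]%g) * p.-1 * #|{ffun B -> A}|)%N =
   (\sum_(x : B) (#|A| * \sum_(f : {ffun B -> A}) #[((f, x) : W)]%g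
                  + #[x]%g * p.-1 * #|{ffun B -> A}|))%N.
  by rewrite big_split /= sumW big_distrr /= !big_distrl.
rewrite E E2 sumW big_distrr /=; split; apply: leq_sum => x _; by case: (sum_fiber_bounds x).
Qed.

Lemma cardW : #|{: W}| = (#|{ffun B -> A}| * #|B|)%N.
Proof. exact: card_prod. Qed.



Lemma avg_bounds (R : realType) :
  0 <= p%:R * avg_order R B - avg_order R W <=
  (p.-1)%:R * avg_order R B / (#|A|%:R).
Proof.
case: total_bounds => H1 H2.
rewrite /avg_order cardW -!natr_sum.
set S := (\sum_(w : W) #[w]%g)%N in H1 H2 *.
set T := (\sum_(x : B) #[x]%g)%N in H1 H2 *.
set K := #|{ffun B -> A}| in H1 H2 *.
have B0 : (0 < #|B|)%N by apply/card_gt0P; exists 1%g.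
have A0 : (0 < #|A|)%N by apply/card_gt0P; exists 0.
have K0 : (0 < K)%N by rewrite /K card_ffun expn_gt0 A0.
have R1 : S%:R <= K%:R * (T%:R * p%:R) :> R by rewrite -!natrM ler_nat.
have R2 : #|A|%:R * (K%:R * (T%:R * p%:R)) <= #|A|%:R * S%:R + T%:R * (p.-1)%:R * K%:R :> R.
  by rewrite -!natrM -natrD ler_nat.
have K0' : 0 < K%:R :> R by rewrite ltr0n.
have B0' : 0 < #|B|%:R :> R by rewrite ltr0n.
have A0' : 0 < #|A|%:R :> R by rewrite ltr0n.
have E : p%:R * (T%:R / #|B|%:R) - S%:R / (K * #|B|)%N%:R =
         (p%:R * T%:R * K%:R - S%:R) / (K%:R * #|B|%:R) :> R.
  by rewrite natrM; field; apply/andP; split; rewrite gt_eqF.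
rewrite E; apply/andP; split.
  by apply: divr_ge0; [rewrite subr_ge0; lra | apply: mulr_ge0; lra].
have -> : (p.-1)%:R * (T%:R / #|B|%:R) / #|A|%:R =
          ((p.-1)%:R * T%:R * K%:R / #|A|%:R) / (K%:R * #|B|%:R) :> R.
  by field; rewrite !gt_eqF.
rewrite ler_pM2r ?invr_gt0 ?mulr_gt0 // ler_pdivlMr //.
lra.
Qed.
End Wr.

Lemma cardA (p k : nat) : prime p -> #|{: 'rV['Z_p]_k}| = (p ^ k)%N.
Proof.
move=> pr; rewrite card_mx mul1n card_ord Zp_cast //; exact: prime_gt1.
Qed.

Local Open Scope classical_set_scope.

Lemma main_cvg (R : realType) (p : nat) (B : nat -> finGroupType) (beta : R) :
  prime p ->
  (fun n => avg_order R (B n)) @ \oo --> beta ->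
  (fun n => avg_order R (wreath_prod ('rV['Z_p]_(n.+1)) (B n))) @ \oo
        --> p%:R * beta.
Proof.
move=> pr hb.
set b := (fun n => avg_order R (B n)) in hb *.
set a := (fun n => avg_order R (wreath_prod ('rV['Z_p]_(n.+1)) (B n))).
set e := (fun n => p%:R * b n - a n).
set h := (fun n => (p.-1)%:R * b n * harmonic n).
have bge0 n : 0 <= b n.
  by rewrite /b /avg_order divr_ge0 // ?sumr_ge0 // => i _; rewrite ler0n.
have he : e @ \oo --> 0.
  apply: (@squeeze_cvgr _ _ _ _ (fun=> 0) h).
  - apply: nearW => n; have /andP[H1 H2] := avg_bounds p (n.+1) (B n) pr R.
    rewrite /e H1 /=; apply: (le_trans H2).
    rewrite /h /=; apply: ler_wpM2l; first by apply: mulr_ge0; [rewrite ler0n | exact: bge0].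
    have A0 : (n.+1 <= #|{: 'rV['Z_p]_n.+1}|)%N.
      by rewrite cardA //; apply: ltnW; apply: ltn_expl; apply: prime_gt1.
    rewrite lef_pV2 ?posrE ?ltr0n ?ler_nat //; exact: leq_trans A0.
  - exact: (cvg_cst (0 : R)).
  - rewrite /h -(mulr0 ((p.-1)%:R * beta)); apply: cvgM; last exact: (@cvg_harmonic R).
    by apply: cvgM => //; exact: cvg_cst.
have -> : a = (fun n => p%:R * b n - e n).
  by apply: funext => n; rewrite /e opprB addrC subrK.
rewrite -(subr0 (p%:R * beta)); apply: cvgB => //; apply: cvgM => //; exact: cvg_cst.
Qed.

Lemma AOL_p (R : realType) (p : nat) (beta : R) :
  prime p -> AOL p beta -> AOL p (p%:R * beta).
Proof.
move=> pr [G [hp hg hc]].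
exists (fun n => (wreath_prod 'rV['Z_p]_(n.+1) (G n) : finGroupType)); split.
- move=> n; move: (hp n); rewrite /is_pgroup /pgroup !cardsT cardW card_ffun cardA //.
  by rewrite pnatM pnatX pnatX (pnat_id pr) => ->.
- move=> M; have [N HN] := hg M; exists N => n /HN HM.
  apply: (leq_trans HM); rewrite cardW leq_pmull // card_ffun expn_gt0 cardA //.
  by rewrite expn_gt0 prime_gt0.
- exact: main_cvg.
Qed.

Theorem theorem7 (R : realType) (p : nat) (B : nat -> finGroupType) (beta : R) :
  prime p ->
  (forall n, is_pgroup p (B n)) ->
  (forall n, (1 < #|B n|)%N) ->
  (fun n => avg_order R (B n)) @ \oo --> beta ->
  [/\ (fun n => avg_order R (wreath_prod ('rV['Z_p]_(n.+1)) (B n))) @ \oo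
        --> p%:R * beta,
      AOL p beta -> AOL p (p%:R * beta)
    & AOL p beta -> forall r : nat, AOL p ((p ^ r)%:R * beta)].
Proof.
move=> pr _ _ hb; split.
- exact: main_cvg.
- exact: AOL_p.
- move=> h r; elim: r => [|r IH]; first by rewrite expn0 mul1r.
  by rewrite expnS natrM -mulrA; apply: AOL_p.
Qed.
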